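(* Let $\{R_i\}_{i\in I}$ be a family of commutative rings with identity and $R=\prod_{i\in I}R_i$. The following are equivalent: (1) $R$ is almost complemented and $\mathfrak{N}(R)=\prod_{i\in I}\mathfrak{N}(R_i)$; (2) $R$ is almost complemented and $\mathrm{areg}(R)=\prod_{i\in I}\mathrm{areg}(R_i)$.
   Context: For a ring $A$, $\mathfrak{N}(A)$ is the nilradical, $\mathrm{reg}(A)$ the set of regular elements, and $\mathrm{areg}(A)=\{x\in A: x+\mathfrak{N}(A)\in\mathrm{reg}(A/\mathfrak{N}(A))\}$. $A$ is complemented if for every $a$ there is $b$ with $ab=0$ and $a+b\in\mathrm{reg}(A)$; $A$ is almost complemented if $A/\mathfrak{N}(A)$ is complemented. *)

(* Defs.v *)
From HB Require Import structures.
From mathcomp Require Import all_boot all_order all_algebra.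
From mathcomp Require Import boolp.

Set Implicit Arguments.
Unset Strict Implicit.
Unset Printing Implicit Defensive.

Import GRing.Theory.
Local Open Scope ring_scope.

Section RingNotions.
Variable A : comPzRingType.

Definition nilrad (x : A) : Prop := exists n : nat, x ^+ n = 0.

Definition regular (x : A) : Prop := forall y : A, x * y = 0 -> y = 0.

(** areg(A) = { x | x + N(A) is regular in A/N(A) }, written out:
    the class of y is zero in A/N(A) iff y \in N(A). *)
Definition areg (x : A) : Prop := forall y : A, nilrad (x * y) -> nilrad y.

Definition complemented : Prop :=
  forall a : A, exists b : A, a * b = 0 /\ regular (a + b).

(** A almost complemented: A/N(A) complemented, written out on
    representatives: for every a there is b with ab \in N(A) and
    (a + b) + N(A) regular in A/N(A), i.e. a + b \in areg(A). *)
Definition almost_complemented : Prop :=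
  forall a : A, exists b : A, nilrad (a * b) /\ areg (a + b).

End RingNotions.

Section Product.
Variables (I : Type) (R : I -> comPzRingType).

Definition prodR : Type := forall i : I, R i.

HB.instance Definition _ := gen_eqMixin prodR.
HB.instance Definition _ := gen_choiceMixin prodR.

Definition prod_zero : prodR := fun i => 0.
Definition prod_opp (x : prodR) : prodR := fun i => - x i.
Definition prod_add (x y : prodR) : prodR := fun i => x i + y i.
Definition prod_one : prodR := fun i => 1.
Definition prod_mul (x y : prodR) : prodR := fun i => x i * y i.

Lemma prod_addA : associative prod_add.
Proof. by move=> x y z; apply: functional_extensionality_dep => i; rewrite /prod_add addrA. Qed.
Lemma prod_addC : commutative prod_add.
Proof. by move=> x y; apply: functional_extensionality_dep => i; rewrite /prod_add addrC. Qed.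
Lemma prod_add0 : left_id prod_zero prod_add.
Proof. by move=> x; apply: functional_extensionality_dep => i; rewrite /prod_add add0r. Qed.
Lemma prod_addN : left_inverse prod_zero prod_opp prod_add.
Proof. by move=> x; apply: functional_extensionality_dep => i; rewrite /prod_add addNr. Qed.

HB.instance Definition _ :=
  GRing.isZmodule.Build prodR prod_addA prod_addC prod_add0 prod_addN.

Lemma prod_mulA : associative prod_mul.
Proof. by move=> x y z; apply: functional_extensionality_dep => i; rewrite /prod_mul mulrA. Qed.
Lemma prod_mulC : commutative prod_mul.
Proof. by move=> x y; apply: functional_extensionality_dep => i; rewrite /prod_mul mulrC. Qed.
Lemma prod_mul1 : left_id prod_one prod_mul.
Proof. by move=> x; apply: functional_extensionality_dep => i; rewrite /prod_mul mul1r. Qed.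
Lemma prod_mulDl : left_distributive prod_mul (+%R : prodR -> prodR -> prodR).
Proof. by move=> x y z; apply: functional_extensionality_dep => i; rewrite /prod_mul /= /prod_add mulrDl. Qed.

HB.instance Definition _ :=
  GRing.Zmodule_isComPzRing.Build prodR prod_mulA prod_mulC prod_mul1 prod_mulDl.

Lemma prodR_mulE (x y : prodR) (i : I) : (x * y) i = x i * y i.
Proof. by []. Qed.
Lemma prodR_addE (x y : prodR) (i : I) : (x + y) i = x i + y i.
Proof. by []. Qed.

End Product.

(* Main.v *)
Require Import Defs.
From mathcomp Require Import all_boot all_order all_algebra.
From mathcomp Require Import boolp.
Import GRing.Theory.
Local Open Scope ring_scope.

Lemma nil_mulr (A : comPzRingType) (a c : A) : nilrad a -> nilrad (c * a).
Proof. by case=> n hn; exists n; rewrite exprMn hn mulr0. Qed.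

Lemma nil_add (A : comPzRingType) (a c : A) : nilrad a -> nilrad c -> nilrad (a + c).
Proof.
case=> m hm [n hn]; exists (m + n)%N; rewrite exprDn big1 // => k _.
case: (leqP n k) => hk.
  by rewrite -(subnKC hk) exprD hn mul0r mulr0 mul0rn.
have -> : (m + n - k = m + (n - k))%N by rewrite -addnBA // ltnW.
by rewrite exprD hm !mul0r mul0rn.
Qed.

Lemma areg_nil (A : comPzRingType) (n c : A) : nilrad n -> areg (n + c) -> areg c.
Proof.
move=> hn hr y hy; apply: hr; rewrite mulrDl; apply: nil_add => //.
by rewrite mulrC; apply: nil_mulr.
Qed.

Lemma prod_expE (I : Type) (R : I -> comPzRingType) (x : prodR R) i n :
  (x ^+ n) i = x i ^+ n.
Proof. elim: n => [|n IH]; first by []. by rewrite !exprS prodR_mulE IH. Qed.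

Lemma nil_coord (I : Type) (R : I -> comPzRingType) (x : prodR R) i :
  nilrad x -> nilrad (x i).
Proof. by case=> n hn; exists n; rewrite -prod_expE hn. Qed.

Theorem mainTheorem10 (I : Type) (R : I -> comPzRingType) :
  (almost_complemented (prodR R) /\
     (forall x : prodR R, nilrad x <-> (forall i : I, nilrad (x i)))) <->
  (almost_complemented (prodR R) /\
     (forall x : prodR R, areg x <-> (forall i : I, areg (x i)))).
Proof.
split.
- case=> hac hN; split => // x; split.
  + move=> hx i yi hyi.
    pose y : prodR R := fun j => match pselect (i = j) with
                                 | left e => eq_rect i R yi j e
                                 | right _ => 0 end.
    have : nilrad y.
      apply: hx; apply/hN => j; rewrite prodR_mulE /y.
      case: pselect => [e|ne]; last by exists 1%N; rewrite mulr0 expr1.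
      by case: j / e.
    move/(@nil_coord I R y i); rewrite /y; case: pselect => [e|ne]; last by [].
    by rewrite (Prop_irrelevance e erefl).
  + move=> hx y /hN hy; apply/hN => i; apply: hx; exact: hy.
- case=> hac hA; split => // x; split; first by move=> hx i; apply: nil_coord.
  move=> hx; have [b [hxb hr]] := hac x.
  have hb : areg b.
    apply/hA => i; apply: (@areg_nil _ (x i) (b i) (hx i)).
    by move/hA: hr => /(_ i).
  by apply: hb; rewrite mulrC.
Qed.
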